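(* (5) $\overline{\mathcal{H}_{\mbox{s-conv}}(S^n)}\subset\mathcal{H}^\circ(S^n)$; (6) $\bigcirc(\mathcal{H}_{\mbox{s-conv}}(S^n))\neq\mathcal{H}_{\mbox{s-conv}}(S^n)$; (7) $\bigcirc(\overline{\mathcal{H}_{\mbox{s-conv}}(S^n)})=\overline{\mathcal{H}_{\mbox{s-conv}}(S^n)}$; (8) the restriction of $\bigcirc$ to $\overline{\mathcal{H}_{\mbox{s-conv}}(S^n)}$ is injective. Here $\bigcirc(W)=W^\circ$.
   Context: $S^n$ is the unit sphere in $\mathbb{R}^{n+1}$, $n\ge1$; $|PQ|=\arccos(P\cdot Q)$. $H(P)=\{Q\in S^n:P\cdot Q\ge0\}$ and $W^\circ=\bigcap_{P\in W}H(P)$. $\mathcal{H}(S^n)$ is the set of non-empty closed subsets of $S^n$ with the Pompeiu-Hausdorff metric $h(A,B)=\max\{\max_{x\in A}\min_{y\in B}|xy|,\ \max_{y\in B}\min_{x\in A}|xy|\}$, and $\mathcal{H}^\circ(S^n)=\{W\in\mathcal{H}(S^n):W^\circ\ne\emptyset\}$. A subset is hemispherical if it is disjoint from $H(P)$ for some $P\in S^n$. For $A,B$ in a hemispherical set, the arc $AB=\{((1-t)A+tB)/\|(1-t)A+tB\|:0\le t\le1\}$; a hemispherical set $W$ is spherical convex if $AB\subset W$ for all $A,B\in W$. $\mathcal{H}_{\mbox{s-conv}}(S^n)$ is the set of non-empty closed spherical convex subsets of $S^n$, and $\overline{\mathcal{H}_{\mbox{s-conv}}(S^n)}$ is its closure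 in $(\mathcal{H}(S^n),h)$. *)

(* Defs.v *)
From Stdlib Require Import Reals Lra.
Open Scope R_scope.

(* Points of R^{n+1} are functions nat -> R; only coordinates 0..n matter,
   and points of S^n are required to vanish beyond index n. *)
Definition Pt := nat -> R.

Definition dot (n : nat) (x y : Pt) : R := sum_f_R0 (fun i => x i * y i) n.

Definition sphere (n : nat) (x : Pt) : Prop :=
  (forall i, (n < i)%nat -> x i = 0) /\ dot n x x = 1.

Definition sdist (n : nat) (P Q : Pt) : R := acos (dot n P Q).

Definition Hemi (n : nat) (P : Pt) (Q : Pt) : Prop := sphere n Q /\ dot n P Q >= 0.

Definition polar (n : nat) (W : Pt -> Prop) (Q : Pt) : Prop :=
  sphere n Q /\ forall P, W P -> dot n P Q >= 0.

Definition closed_in_sphere (n : nat) (W : Pt -> Prop) : Prop :=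
  forall x, sphere n x ->
    (forall eps, eps > 0 -> exists y, W y /\ sdist n x y < eps) -> W x.

Definition HS (n : nat) (W : Pt -> Prop) : Prop :=
  (forall x, W x -> sphere n x) /\ (exists x, W x) /\ closed_in_sphere n W.

Definition Hcirc (n : nat) (W : Pt -> Prop) : Prop :=
  HS n W /\ exists Q, polar n W Q.

(* Pompeiu-Hausdorff distance, literally as max over A of min over B, etc.
   hdist n A B r  means  h(A,B) = r  (max / min are attained on compact sets). *)
Definition mindist (n : nat) (x : Pt) (B : Pt -> Prop) (r : R) : Prop :=
  (exists b, B b /\ sdist n x b = r) /\ (forall b, B b -> r <= sdist n x b).

Definition excess (n : nat) (A B : Pt -> Prop) (r : R) : Prop :=
  (exists a, A a /\ mindist n a B r) /\
  (forall a r', A a -> mindist n a B r' -> r' <= r).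

Definition hdist (n : nat) (A B : Pt -> Prop) (r : R) : Prop :=
  exists r1 r2, excess n A B r1 /\ excess n B A r2 /\ r = Rmax r1 r2.

Definition hclosure (n : nat) (F : (Pt -> Prop) -> Prop) (W : Pt -> Prop) : Prop :=
  HS n W /\
  forall eps, eps > 0 -> exists V r, F V /\ hdist n W V r /\ r < eps.

Definition hemispherical (n : nat) (W : Pt -> Prop) : Prop :=
  exists P, sphere n P /\ forall Q, W Q -> ~ Hemi n P Q.

Definition arc_pt (n : nat) (A B : Pt) (t : R) : Pt :=
  let v := fun i => (1 - t) * A i + t * B i in
  fun i => v i / sqrt (dot n v v).

Definition s_convex (n : nat) (W : Pt -> Prop) : Prop :=
  hemispherical n W /\
  forall A B t, W A -> W B -> 0 <= t <= 1 -> W (arc_pt n A B t).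

Definition Hsconv (n : nat) (W : Pt -> Prop) : Prop := HS n W /\ s_convex n W.

Definition polar_image (n : nat) (F : (Pt -> Prop) -> Prop) (W : Pt -> Prop) : Prop :=
  exists V, F V /\ W = polar n V.

(* Main.v *)
Require Import Defs.
From Stdlib Require Import Reals Lra Psatz Classical ClassicalEpsilon FunctionalExtensionality PropExtensionality Rtopology ZArith.
Open Scope R_scope.

Definition vadd (x y : Pt) : Pt := fun i => x i + y i.
Definition vsub (x y : Pt) : Pt := fun i => x i - y i.
Definition vscal (a : R) (x : Pt) : Pt := fun i => a * x i.
Definition vopp (x : Pt) : Pt := fun i => - x i.
Definition nrm n x := sqrt (dot n x x).
Definition cd n x y := nrm n (vsub x y).

Ltac dotind := unfold dot, vadd, vsub, vscal, vopp in *;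
  let n := fresh "m" in let IH := fresh "IH" in
  match goal with |- context [sum_f_R0 _ ?k] => induction k as [|n IH]; simpl; [ring | rewrite IH; ring] end.

Lemma dot_sym n x y : dot n x y = dot n y x.
Proof. dotind. Qed.
Lemma dot_add_l n x y z : dot n (vadd x y) z = dot n x z + dot n y z.
Proof. dotind. Qed.
Lemma dot_sub_l n x y z : dot n (vsub x y) z = dot n x z - dot n y z.
Proof. dotind. Qed.
Lemma dot_scal_l n a x z : dot n (vscal a x) z = a * dot n x z.
Proof. dotind. Qed.
Lemma dot_opp_l n x z : dot n (vopp x) z = - dot n x z.
Proof. dotind. Qed.
Lemma dot_add_r n x y z : dot n z (vadd x y) = dot n z x + dot n z y.
Proof. dotind. Qed.
Lemma dot_sub_r n x y z : dot n z (vsub x y) = dot n z x - dot n z y.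
Proof. dotind. Qed.
Lemma dot_scal_r n a x z : dot n z (vscal a x) = a * dot n z x.
Proof. dotind. Qed.
Lemma dot_opp_r n x z : dot n z (vopp x) = - dot n z x.
Proof. dotind. Qed.
Lemma dot_comb_l n a b x y z : dot n (fun i => a * x i + b * y i) z = a * dot n x z + b * dot n y z.
Proof. dotind. Qed.
Lemma dot_comb_r n a b x y z : dot n z (fun i => a * x i + b * y i) = a * dot n z x + b * dot n z y.
Proof. dotind. Qed.

Lemma dot_self_ge0 n x : 0 <= dot n x x.
Proof. unfold dot; induction n; simpl; nra. Qed.

Lemma dot_ext n x x' y : (forall i, (i <= n)%nat -> x i = x' i) -> dot n x y = dot n x' y.
Proof. unfold dot; induction n; simpl; intros H.
  - rewrite H; auto.
  - rewrite IHn, H; auto. Qed.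

Lemma dot_expand n x y t :
  dot n (vadd x (vscal t y)) (vadd x (vscal t y)) = dot n x x + 2 * t * dot n x y + t * t * dot n y y.
Proof. dotind. Qed.

Lemma CS n x y : dot n x y * dot n x y <= dot n x x * dot n y y.
Proof.
  pose proof (dot_self_ge0 n x). pose proof (dot_self_ge0 n y).
  destruct (Req_dec (dot n y y) 0) as [Hc|Hc].
  - destruct (Req_dec (dot n x y) 0) as [Hb|Hb].
    + rewrite Hb, Hc; nra.
    + pose proof (dot_self_ge0 n (vadd x (vscal (- (dot n x x + 1) / (2 * dot n x y)) y))) as H1.
      rewrite dot_expand, Hc in H1.
      replace (dot n x x + 2 * (- (dot n x x + 1) / (2 * dot n x y)) * dot n x y +
        - (dot n x x + 1) / (2 * dot n x y) * (- (dot n x x + 1) / (2 * dot n x y)) * 0) with (-1) in H1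
        by (field; auto). lra.
  - pose proof (dot_self_ge0 n (vadd x (vscal (- dot n x y / dot n y y) y))) as H1.
    rewrite dot_expand in H1.
    assert (0 < dot n y y) by lra.
    assert (0 <= dot n x x - dot n x y * dot n x y / dot n y y).
    { replace (dot n x x - dot n x y * dot n x y / dot n y y) with
        (dot n x x + 2 * (- dot n x y / dot n y y) * dot n x y +
         (- dot n x y / dot n y y) * (- dot n x y / dot n y y) * dot n y y) by (field; lra).
      auto. }
    apply Rmult_le_reg_r with (/ dot n y y). apply Rinv_0_lt_compat; auto.
    replace (dot n x x * dot n y y * / dot n y y) with (dot n x x) by (field; lra).
    unfold Rdiv in H2. lra.
Qed.

Lemma nrm_ge0 n x : 0 <= nrm n x.
Proof. apply sqrt_pos. Qed.
Lemma nrm_sq n x : nrm n x * nrm n x = dot n x x.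
Proof. apply sqrt_sqrt, dot_self_ge0. Qed.

Lemma CS_nrm n x y : Rabs (dot n x y) <= nrm n x * nrm n y.
Proof.
  pose proof (CS n x y). rewrite <- (nrm_sq n x), <- (nrm_sq n y) in H.
  pose proof (nrm_ge0 n x); pose proof (nrm_ge0 n y).
  replace (nrm n x * nrm n x * (nrm n y * nrm n y)) with ((nrm n x * nrm n y) * (nrm n x * nrm n y)) in H by ring.
  assert (Hs : Rsqr (dot n x y) <= Rsqr (nrm n x * nrm n y)) by (unfold Rsqr; auto).
  apply Rsqr_le_abs_0 in Hs. rewrite (Rabs_right (nrm n x * nrm n y)) in Hs; [auto| nra].
Qed.

Lemma nrm_le_sq n x c : 0 <= c -> dot n x x <= c * c -> nrm n x <= c.
Proof. intros; rewrite <- (sqrt_square c); auto; unfold nrm; apply sqrt_le_1_alt; auto. Qed.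

Lemma nrm_ge_sq n x c : 0 <= c -> c * c <= dot n x x -> c <= nrm n x.
Proof. intros; rewrite <- (sqrt_square c); auto; unfold nrm; apply sqrt_le_1_alt; auto. Qed.

Lemma nrm_add n x y : nrm n (vadd x y) <= nrm n x + nrm n y.
Proof.
  apply nrm_le_sq. pose proof (nrm_ge0 n x); pose proof (nrm_ge0 n y); lra.
  replace (vadd x y) with (vadd x (vscal 1 y)) by (apply functional_extensionality; intro; unfold vadd, vscal; ring).
  rewrite dot_expand. pose proof (CS_nrm n x y). rewrite <- (nrm_sq n x), <- (nrm_sq n y).
  pose proof (Rle_abs (dot n x y)). nra.
Qed.

Lemma nrm_scal n a x : nrm n (vscal a x) = Rabs a * nrm n x.
Proof.
  unfold nrm. rewrite dot_scal_l, dot_scal_r.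
  rewrite <- Rmult_assoc, sqrt_mult_alt.
  - f_equal. rewrite <- (sqrt_Rsqr_abs a). unfold Rsqr; auto.
  - nra.
Qed.

Lemma vsub_split x y z : vsub x z = vadd (vsub x y) (vsub y z).
Proof. apply functional_extensionality; intro; unfold vsub, vadd; ring. Qed.

Lemma cd_tri n x y z : cd n x z <= cd n x y + cd n y z.
Proof. unfold cd. rewrite (vsub_split x y z). apply nrm_add. Qed.

Lemma cd_sym n x y : cd n x y = cd n y x.
Proof. unfold cd, nrm. f_equal. replace (vsub y x) with (vscal (-1) (vsub x y))
  by (apply functional_extensionality; intro; unfold vsub, vscal; ring).
  rewrite dot_scal_l, dot_scal_r; ring. Qed.

Lemma cd_ge0 n x y : 0 <= cd n x y.
Proof. apply nrm_ge0. Qed.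

Lemma cd_self n x : cd n x x = 0.
Proof. unfold cd, nrm. replace (dot n (vsub x x) (vsub x x)) with 0. apply sqrt_0.
  unfold dot, vsub; induction n; simpl; [ring| rewrite <- IHn; ring]. Qed.

Lemma dot_diff n a x y : Rabs (dot n a x - dot n a y) <= nrm n a * cd n x y.
Proof. rewrite <- dot_sub_r. apply CS_nrm. Qed.

Lemma sphere_dot n x y : sphere n x -> sphere n y -> -1 <= dot n x y <= 1.
Proof.
  intros [_ Hx] [_ Hy].
  pose proof (dot_self_ge0 n (vadd x (vscal 1 y))). pose proof (dot_self_ge0 n (vadd x (vscal (-1) y))).
  rewrite dot_expand in *. lra.
Qed.

Lemma cd_sq n x y : sphere n x -> sphere n y -> cd n x y * cd n x y = 2 - 2 * dot n x y.
Proof.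
  intros [_ Hx] [_ Hy]. unfold cd. rewrite nrm_sq.
  replace (vsub x y) with (vadd x (vscal (-1) y)) by (apply functional_extensionality; intro; unfold vsub, vadd, vscal; ring).
  rewrite dot_expand. lra.
Qed.

Lemma nrm_sphere n x : sphere n x -> nrm n x = 1.
Proof. intros [_ H]; unfold nrm; rewrite H; apply sqrt_1. Qed.

Lemma sum_sq_zero f m : sum_f_R0 (fun i => f i * f i) m = 0 -> forall i, (i <= m)%nat -> f i = 0.
Proof.
  induction m; simpl; intros H i Hi.
  - assert (i = 0%nat) by lia; subst; nra.
  - assert (0 <= sum_f_R0 (fun i => f i * f i) m) by (clear; induction m; simpl; nra).
    assert (f (S m) * f (S m) = 0) by nra.
    destruct (Nat.eq_dec i (S m)). subst; nra.
    apply IHm; [nra | lia].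
Qed.

Lemma sphere_eq n x y : sphere n x -> sphere n y -> dot n x y = 1 -> x = y.
Proof.
  intros Hx Hy H. pose proof (cd_sq n x y Hx Hy). rewrite H in H0.
  unfold cd in H0; rewrite nrm_sq in H0.
  assert (Hz : dot n (vsub x y) (vsub x y) = 0) by lra.
  apply functional_extensionality; intro i.
  destruct (Compare_dec.le_lt_dec i n).
  - pose proof (sum_sq_zero (vsub x y) n Hz i l). unfold vsub in H1; lra.
  - destruct Hx as [Hx _], Hy as [Hy _]. rewrite Hx, Hy; auto.
Qed.

Lemma sphere_opp n x : sphere n x -> sphere n (vopp x).
Proof. intros [H1 H2]; split. intros; unfold vopp; rewrite H1; auto; ring.
  rewrite dot_opp_l, dot_opp_r; lra. Qed.

Definition nz n (v : Pt) : Pt := fun i => v i / sqrt (dot n v v).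

Lemma nz_eq n v : nz n v = vscal (/ nrm n v) v.
Proof. apply functional_extensionality; intro; unfold nz, vscal, nrm; field_simplify_eq; auto.
 Abort.

Lemma dot_mulc n w v s : dot n w (fun i => v i * s) = dot n w v * s.
Proof. dotind. Qed.
Lemma dot_nz_r n w v : dot n w (nz n v) = dot n w v / nrm n v.
Proof. unfold nz, nrm, Rdiv. apply dot_mulc. Qed.

Lemma dot_nz_l n w v : dot n (nz n v) w = dot n v w / nrm n v.
Proof. rewrite dot_sym, dot_nz_r, dot_sym; auto. Qed.

Lemma nz_sphere n v : (forall i, (n < i)%nat -> v i = 0) -> 0 < dot n v v -> sphere n (nz n v).
Proof.
  intros H1 H2; split.
  - intros; unfold nz; rewrite H1; auto; unfold Rdiv; ring.
  - rewrite dot_nz_l, dot_nz_r. pose proof (nrm_sq n v).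
    assert (0 < nrm n v) by (unfold nrm; apply sqrt_lt_R0; auto).
    field_simplify; [|lra]. rewrite <- H; field; lra.
Qed.

Lemma nz_sphere_id n x : sphere n x -> nz n x = x.
Proof. intros [_ H]. apply functional_extensionality; intro; unfold nz; rewrite H, sqrt_1; field. Qed.

Lemma nrm_pos n v : 0 < dot n v v -> 0 < nrm n v.
Proof. intros; unfold nrm; apply sqrt_lt_R0; auto. Qed.

Lemma acos_lt_anti x y : -1 <= x -> x < y -> y <= 1 -> acos y < acos x.
Proof.
  intros. destruct (acos_bound x); destruct (acos_bound y).
  destruct (Rlt_le_dec (acos y) (acos x)) as [h|h]; auto.
  destruct (Rle_lt_or_eq_dec _ _ h) as [h'|h'].
  - pose proof (cos_decreasing_1 (acos x) (acos y) H2 H3 H4 H5 h').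
    rewrite !cos_acos in H6; lra.
  - assert (cos (acos x) = cos (acos y)) by (rewrite h'; auto). rewrite !cos_acos in H6; lra.
Qed.

Lemma acos_anti x y : -1 <= x -> x <= y -> y <= 1 -> acos y <= acos x.
Proof. intros. destruct (Rle_lt_or_eq_dec _ _ H0). left; apply acos_lt_anti; auto. subst; lra. Qed.

Lemma acos_le_cos x r : -1 <= x <= 1 -> 0 <= r <= PI -> acos x <= r -> cos r <= x.
Proof.
  intros. destruct (acos_bound x).
  destruct (Rle_lt_or_eq_dec _ _ H1).
  - assert (0 <= r <= PI) by lra.
    pose proof (cos_decreasing_1 (acos x) r H2 H3 (proj1 H4) (proj2 H4) r0). rewrite cos_acos in H5; lra.
  - subst. rewrite cos_acos; lra.
Qed.

Lemma sdist_self n x : sphere n x -> sdist n x x = 0.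
Proof. intros [_ H]; unfold sdist; rewrite H; apply acos_1. Qed.

Lemma sdist_ge0 n x y : 0 <= sdist n x y.
Proof. apply acos_bound. Qed.

Lemma sdist_sym n x y : sdist n x y = sdist n y x.
Proof. unfold sdist; rewrite dot_sym; auto. Qed.

Lemma cd_le_sdist n x y : sphere n x -> sphere n y -> cd n x y <= sdist n x y.
Proof.
  intros Hx Hy. pose proof (cd_sq n x y Hx Hy). pose proof (sphere_dot n x y Hx Hy).
  set (th := sdist n x y). assert (Hc : cos th = dot n x y) by (apply cos_acos; auto).
  pose proof (acos_bound (dot n x y)). fold (sdist n x y) in H1. fold th in H1.
  replace th with (2 * (th/2)) in Hc by field. rewrite cos_2a_sin in Hc.
  assert (0 <= sin (th/2)) by (apply sin_ge_0; lra).
  assert (sin (th/2) <= th/2).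
  { destruct (Req_dec th 0). rewrite H3. unfold Rdiv; rewrite Rmult_0_l, sin_0; lra.
    left; apply sin_lt_x; lra. }
  pose proof (cd_ge0 n x y). nra.
Qed.

Lemma sdist_small (eps : R) : eps > 0 -> exists delta, delta > 0 /\
  forall n x y, sphere n x -> sphere n y -> cd n x y < delta -> sdist n x y < eps.
Proof.
  intros He. set (e := Rmin eps PI). assert (0 < e) by (unfold e; apply Rmin_pos; [lra| apply PI_RGT_0]).
  assert (e <= PI) by apply Rmin_r. assert (e <= eps) by apply Rmin_l.
  assert (cos e < 1) by (rewrite <- cos_0; apply cos_decreasing_1; lra).
  exists (sqrt (2 - 2 * cos e)). split. apply sqrt_lt_R0; lra.
  intros n x y Hx Hy Hd. pose proof (cd_sq n x y Hx Hy). pose proof (sphere_dot n x y Hx Hy).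
  assert (cd n x y * cd n x y < 2 - 2 * cos e).
  { pose proof (cd_ge0 n x y). pose proof (sqrt_pos (2 - 2 * cos e)).
    pose proof (sqrt_sqrt (2 - 2 * cos e) ltac:(lra)). nra. }
  assert (cos e < dot n x y) by lra.
  unfold sdist. destruct (COS_bound e).
  apply Rlt_le_trans with (acos (cos e)). apply acos_lt_anti; lra. rewrite acos_cos; lra.
Qed.

Fixpoint build (g : nat -> nat -> nat) (k : nat) : nat :=
  match k with O => g O O | S k' => g (S (build g k')) k end.

Lemma inv_small (eps : R) : eps > 0 -> exists N : nat, / (INR N + 1) < eps.
Proof.
  intros. destruct (archimed (/ eps)) as [H1 _].
  assert (0 <= IZR (up (/ eps))). { pose proof (Rinv_0_lt_compat eps H). lra. }
  exists (Z.to_nat (up (/ eps))). rewrite INR_IZR_INZ, Z2Nat.id.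
  2:{ apply le_IZR; lra. }
  pose proof (Rinv_0_lt_compat eps H).
  apply Rlt_le_trans with (/ / eps). apply Rinv_lt_contravar. nra. lra. rewrite Rinv_inv; lra.
Qed.

Lemma inv_mono (a b : nat) : (a <= b)%nat -> / (INR b + 1) <= / (INR a + 1).
Proof. intros. apply Rinv_le_contravar. pose proof (pos_INR a); lra. apply le_INR in H; lra. Qed.

Lemma incr_ge (p : nat -> nat) : (forall k, (p k < p (S k))%nat) -> forall k, (k <= p k)%nat.
Proof. intros H k; induction k; [lia| specialize (H k); lia]. Qed.

Lemma incr_mono (p : nat -> nat) : (forall k, (p k < p (S k))%nat) -> forall a b, (a <= b)%nat -> (p a <= p b)%nat.
Proof. intros H a b Hab; induction Hab; [lia| specialize (H m); lia]. Qed.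

Lemma bw1 (a : nat -> R) : (forall k, -1 <= a k <= 1) ->
  exists psi : nat -> nat, (forall k, (psi k < psi (S k))%nat) /\
  exists c, forall eps, eps > 0 -> exists N, forall k, (N <= k)%nat -> Rabs (a (psi k) - c) < eps.
Proof.
  intros Ha. destruct (Bolzano_Weierstrass a (fun c => -1 <= c <= 1) (compact_P3 (-1) 1) Ha) as [c Hc].
  assert (Hg : forall N j : nat, exists p, (N <= p)%nat /\ Rabs (a p - c) < / (INR j + 1)).
  { intros N j. assert (Hp : 0 < / (INR j + 1)) by (apply Rinv_0_lt_compat; pose proof (pos_INR j); lra).
    destruct (Hc (disc c (mkposreal _ Hp)) N) as [p [H1 H2]].
    - exists (mkposreal _ Hp). intros y Hy; auto.
    - exists p; split; auto. }
  set (g := fun N j => proj1_sig (constructive_indefinite_description _ (Hg N j))).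
  assert (Hg1 : forall N j, (N <= g N j)%nat /\ Rabs (a (g N j) - c) < / (INR j + 1)).
  { intros; unfold g; destruct (constructive_indefinite_description _ (Hg N j)); simpl; auto. }
  exists (build g). split.
  - intros k; simpl. destruct (Hg1 (S (build g k)) (S k)); lia.
  - exists c. intros eps He. destruct (inv_small eps He) as [N HN]. exists N. intros k Hk.
    assert (Rabs (a (build g k) - c) < / (INR k + 1)).
    { destruct k; simpl; apply Hg1. }
    pose proof (inv_mono N k Hk). lra.
Qed.

Lemma sphere_coord n x i : sphere n x -> -1 <= x i <= 1.
Proof.
  intros [H1 H2]. destruct (Compare_dec.le_lt_dec i n).
  - assert (x i * x i <= dot n x x).
    { unfold dot. clear H1 H2. induction n; simpl.
      - assert (i = 0%nat) by lia; subst; lra.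
      - destruct (Nat.eq_dec i (S n)). subst.
        assert (0 <= sum_f_R0 (fun i => x i * x i) n) by (clear; induction n; simpl; nra). lra.
        assert (i <= n)%nat by lia. specialize (IHn H). nra. }
    nra.
  - rewrite H1; auto; lra.
Qed.

Lemma bwm (u : nat -> Pt) : (forall k i, -1 <= u k i <= 1) -> forall m,
  exists phi : nat -> nat, (forall k, (phi k < phi (S k))%nat) /\
  exists l : Pt, forall eps, eps > 0 -> exists N, forall k, (N <= k)%nat -> forall i, (i < m)%nat ->
    Rabs (u (phi k) i - l i) < eps.
Proof.
  intros Hu m. induction m.
  - exists (fun k => k). split. intros; lia. exists (fun _ => 0). intros. exists 0%nat. intros; lia.
  - destruct IHm as [phi [Hphi [l Hl]]].
    destruct (bw1 (fun k => u (phi k) m) (fun k => Hu _ _)) as [psi [Hpsi [c Hc]]].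
    exists (fun k => phi (psi k)). split.
    + intros k. pose proof (incr_mono phi Hphi (S (psi k)) (psi (S k)) ltac:(specialize (Hpsi k); lia)).
      specialize (Hphi (psi k)); lia.
    + exists (fun i => if Nat.eqb i m then c else l i). intros eps He.
      destruct (Hl eps He) as [N1 H1]. destruct (Hc eps He) as [N2 H2].
      exists (Nat.max N1 N2). intros k Hk i Hi.
      destruct (Nat.eqb_spec i m).
      * subst. apply H2; lia.
      * apply H1; [| lia]. pose proof (incr_ge psi Hpsi k); lia.
Qed.

Lemma dot_small n x y e : 0 <= e -> (forall i, (i <= n)%nat -> Rabs (x i - y i) <= e) ->
  dot n (vsub x y) (vsub x y) <= INR (S n) * (e * e).
Proof.
  intros He H. unfold dot, vsub. induction n.
  - simpl. specialize (H 0%nat (le_n _)). assert (Rsqr (x 0%nat - y 0%nat) <= Rsqr e).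
    { rewrite Rsqr_abs. apply Rsqr_incr_1; auto. apply Rabs_pos. } unfold Rsqr in H0; lra.
  - simpl sum_f_R0. rewrite S_INR.
    assert (Rsqr (x (S n) - y (S n)) <= Rsqr e).
    { rewrite Rsqr_abs. apply Rsqr_incr_1; auto. apply Rabs_pos. } unfold Rsqr in H0.
    assert (sum_f_R0 (fun i : nat => (x i - y i) * (x i - y i)) n <= INR (S n) * (e * e)).
    { apply IHn. intros; apply H; lia. }
    lra.
Qed.

Lemma nrm_diff n x y : nrm n x <= nrm n y + cd n x y.
Proof. unfold cd. replace x with (vadd y (vsub x y)) at 1. apply nrm_add.
  apply functional_extensionality; intro; unfold vadd, vsub; ring. Qed.

Lemma seq_compact n (u : nat -> Pt) : (forall k, sphere n (u k)) ->
  exists phi : nat -> nat, (forall k, (phi k < phi (S k))%nat) /\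
  exists l, sphere n l /\ forall eps, eps > 0 -> exists N, forall k, (N <= k)%nat -> cd n (u (phi k)) l < eps.
Proof.
  intros Hu. destruct (bwm u (fun k i => sphere_coord n (u k) i (Hu k)) (S n)) as [phi [Hphi [l Hl]]].
  exists phi. split; auto.
  set (l' := fun i => if Nat.leb i n then l i else 0).
  assert (Hconv : forall eps, eps > 0 -> exists N, forall k, (N <= k)%nat -> cd n (u (phi k)) l' < eps).
  { intros eps He. set (e := eps / (INR (S n) + 1)).
    assert (Hn : 0 < INR (S n)) by (apply lt_0_INR; lia).
    assert (He' : 0 < e) by (unfold e; apply Rdiv_lt_0_compat; lra).
    destruct (Hl e He') as [N HN]. exists N. intros k Hk.
    assert (dot n (vsub (u (phi k)) l') (vsub (u (phi k)) l') <= INR (S n) * (e * e)).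
    { apply dot_small. lra. intros i Hi. unfold l'. replace (Nat.leb i n) with true.
      left; apply HN; auto; lia. symmetry; apply Nat.leb_le; auto. }
    unfold cd. eapply Rle_lt_trans. apply nrm_le_sq with (c := sqrt (INR (S n)) * e).
    apply Rmult_le_pos; [apply sqrt_pos | lra].
    replace (sqrt (INR (S n)) * e * (sqrt (INR (S n)) * e)) with (sqrt (INR (S n)) * sqrt (INR (S n)) * (e * e)) by ring.
    rewrite sqrt_sqrt; lra.
    assert (sqrt (INR (S n)) < INR (S n) + 1).
    { destruct (Rle_dec 1 (INR (S n))). 
      - apply Rle_lt_trans with (INR (S n)). rewrite <- (sqrt_square (INR (S n))) at 2 by lra.
        apply sqrt_le_1_alt. nra. lra.
      - apply Rle_lt_trans with (sqrt 1). apply sqrt_le_1_alt; lra. rewrite sqrt_1; lra. }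
    apply Rlt_le_trans with ((INR (S n) + 1) * e).
    apply Rmult_lt_compat_r; lra. unfold e; right. field. lra. }
  exists l'. split; auto.
  split.
  - intros i Hi. unfold l'. replace (Nat.leb i n) with false; auto. symmetry; apply Nat.leb_gt; auto.
  - assert (nrm n l' = 1).
    { apply Rle_antisym.
      + apply Rnot_lt_le; intro H. destruct (Hconv (nrm n l' - 1) ltac:(lra)) as [N HN].
        specialize (HN N (le_n _)). pose proof (nrm_diff n l' (u (phi N))).
        rewrite (nrm_sphere n (u (phi N)) (Hu _)) in H0. rewrite cd_sym in H0; lra.
      + apply Rnot_lt_le; intro H. destruct (Hconv (1 - nrm n l') ltac:(lra)) as [N HN].
        specialize (HN N (le_n _)). pose proof (nrm_diff n (u (phi N)) l').
        rewrite (nrm_sphere n (u (phi N)) (Hu _)) in H0. lra. }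
    rewrite <- nrm_sq, H; ring.
Qed.

Lemma cd_le2 n x y : sphere n x -> sphere n y -> cd n x y <= 2.
Proof. intros. pose proof (cd_sq n x y H H0). pose proof (sphere_dot n x y H H0). pose proof (cd_ge0 n x y). nra. Qed.

Lemma max_attained n (B : Pt -> Prop) (f : Pt -> R) (K : R) :
  (forall x, B x -> sphere n x) -> (exists x, B x) -> closed_in_sphere n B -> 0 <= K ->
  (forall x y, sphere n x -> sphere n y -> f x - f y <= K * cd n x y) ->
  exists b, B b /\ forall b', B b' -> f b' <= f b.
Proof.
  intros HB [b0 Hb0] Hcl HK Hf.
  set (E := fun r => exists b, B b /\ r = f b).
  assert (Hbd : bound E).
  { exists (f b0 + K * 2). intros r [b [Hb ->]]. pose proof (Hf b b0 (HB b Hb) (HB b0 Hb0)).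
    pose proof (cd_le2 n b b0 (HB b Hb) (HB b0 Hb0)). nra. }
  destruct (completeness E Hbd (ex_intro _ (f b0) (ex_intro _ b0 (conj Hb0 eq_refl)))) as [s [Hs1 Hs2]].
  assert (Hk : forall k : nat, exists b, B b /\ s - / (INR k + 1) < f b).
  { intros k. apply NNPP; intro Hn.
    assert (is_upper_bound E (s - / (INR k + 1))).
    { intros r [b [Hb ->]]. apply Rnot_lt_le; intro; apply Hn; exists b; auto. }
    apply Hs2 in H. assert (0 < / (INR k + 1)) by (apply Rinv_0_lt_compat; pose proof (pos_INR k); lra). lra. }
  set (u := fun k => proj1_sig (constructive_indefinite_description _ (Hk k))).
  assert (Hu : forall k, B (u k) /\ s - / (INR k + 1) < f (u k)).
  { intros; unfold u; destruct (constructive_indefinite_description _ (Hk k)); auto. }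
  destruct (seq_compact n u (fun k => HB _ (proj1 (Hu k)))) as [phi [Hphi [l [Hl Hconv]]]].
  assert (HlB : B l).
  { apply Hcl; auto. intros eps He. destruct (sdist_small eps He) as [d [Hd Hd']].
    destruct (Hconv d Hd) as [N HN]. exists (u (phi N)). split. apply Hu.
    apply Hd'; auto. apply HB, Hu. rewrite cd_sym; apply HN; auto. }
  exists l. split; auto.
  assert (s <= f l).
  { apply Rnot_lt_le; intro H. set (e := s - f l). assert (He : 0 < e) by (unfold e; lra).
    destruct (Hconv (e / 2 / (K + 1))) as [N1 HN1].
    { apply Rdiv_lt_0_compat; lra. }
    destruct (inv_small (e/2)) as [N2 HN2]. lra.
    set (k := Nat.max N1 N2). specialize (HN1 k ltac:(lia)).
    pose proof (Hu (phi k)) as [_ H2]. pose proof (Hf (u (phi k)) l (HB _ (proj1 (Hu _))) Hl).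
    pose proof (inv_mono N2 (phi k) ltac:(pose proof (incr_ge phi Hphi k); lia)).
    assert (K * cd n (u (phi k)) l <= e / 2).
    { apply Rle_trans with ((K + 1) * (e / 2 / (K + 1))). apply Rmult_le_compat; try lra. apply cd_ge0.
      right; field; lra. }
    assert (e = s - f l) by reflexivity. lra. }
  intros b' Hb'. pose proof (Hs1 (f b') (ex_intro _ b' (conj Hb' eq_refl))). lra.
Qed.

Definition gmax n (B : Pt -> Prop) (a : Pt) : R :=
  epsilon (inhabits 0) (fun m => (exists b, B b /\ dot n a b = m) /\ forall b, B b -> dot n a b <= m).

Lemma lip_dot n a x y : sphere n a -> dot n a x - dot n a y <= 1 * cd n x y.
Proof. intros Ha. pose proof (dot_diff n a x y). rewrite nrm_sphere in H by auto.
  pose proof (Rle_abs (dot n a x - dot n a y)). lra. Qed.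

Lemma gmax_spec n B a : sphere n a -> HS n B ->
  (exists b, B b /\ dot n a b = gmax n B a) /\ forall b, B b -> dot n a b <= gmax n B a.
Proof.
  intros Ha [HB1 [HB2 HB3]]. unfold gmax. apply epsilon_spec.
  destruct (max_attained n B (dot n a) 1 HB1 HB2 HB3 ltac:(lra)) as [b [Hb Hmax]].
  { intros; apply lip_dot; auto. }
  exists (dot n a b). split; eauto.
Qed.

Lemma gmax_range n B a : sphere n a -> HS n B -> -1 <= gmax n B a <= 1.
Proof. intros Ha HB. destruct (gmax_spec n B a Ha HB) as [[b [Hb <-]] _].
  apply sphere_dot; auto. apply HB; auto. Qed.

Lemma mindist_g n a B : sphere n a -> HS n B -> mindist n a B (acos (gmax n B a)).
Proof.
  intros Ha HB. destruct (gmax_spec n B a Ha HB) as [[b [Hb Hbe]] Hall]. split.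
  - exists b; split; auto. unfold sdist; rewrite Hbe; auto.
  - intros b' Hb'. unfold sdist. apply acos_anti; auto.
    apply sphere_dot; auto. apply HB; auto. apply gmax_range; auto.
Qed.

Lemma mindist_unique n a B r r' : mindist n a B r -> mindist n a B r' -> r = r'.
Proof. intros [[b [Hb Hb']] H1] [[c [Hc Hc']] H2]. specialize (H1 c Hc). specialize (H2 b Hb). lra. Qed.

Lemma hdist_use n A B r : HS n A -> HS n B -> hdist n A B r ->
  (forall a, A a -> exists b, B b /\ sdist n a b <= r) /\
  (forall b, B b -> exists a, A a /\ sdist n b a <= r).
Proof.
  intros HA HB [r1 [r2 [[_ E1] [[_ E2] ->]]]]. split.
  - intros a Ha. pose proof (mindist_g n a B (proj1 HA a Ha) HB) as Hm.
    specialize (E1 a _ Ha Hm). destruct Hm as [[b [Hb Hbe]] _]. exists b; split; auto.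
    rewrite Hbe. apply Rle_trans with r1; auto. apply Rmax_l.
  - intros b Hb. pose proof (mindist_g n b A (proj1 HB b Hb) HA) as Hm.
    specialize (E2 b _ Hb Hm). destruct Hm as [[a [Ha Hae]] _]. exists a; split; auto.
    rewrite Hae. apply Rle_trans with r2; auto. apply Rmax_r.
Qed.

Lemma excess_exists n A B d : HS n A -> HS n B ->
  (forall a, A a -> exists b, B b /\ sdist n a b <= d) -> exists r, excess n A B r /\ r <= d.
Proof.
  intros HA HB Hd. destruct HA as [HA1 [HA2 HA3]] eqn:EA.
  destruct (max_attained n A (fun a => - gmax n B a) 1 HA1 HA2 HA3 ltac:(lra)) as [a0 [Ha0 Hmin]].
  { intros x y Hx Hy. destruct (gmax_spec n B y Hy HB) as [[b [Hb Hbe]] _].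
    destruct (gmax_spec n B x Hx HB) as [_ Hall]. specialize (Hall b Hb).
    pose proof (dot_diff n b y x). rewrite nrm_sphere in H by (apply HB; auto).
    rewrite (dot_sym n b y), (dot_sym n b x) in H. rewrite cd_sym in H.
    pose proof (Rle_abs (dot n y b - dot n x b)). lra. }
  exists (acos (gmax n B a0)). split; [split|].
  - exists a0; split; auto. apply mindist_g; auto.
  - intros a r' Ha Hm. rewrite (mindist_unique n a B r' (acos (gmax n B a)) Hm (mindist_g n a B (HA1 a Ha) HB)).
    specialize (Hmin a Ha). apply acos_anti; try apply gmax_range; auto; try lra.
  - destruct (Hd a0 Ha0) as [b [Hb Hbd]]. destruct (mindist_g n a0 B (HA1 a0 Ha0) HB) as [_ Hm].
    specialize (Hm b Hb). lra.
Qed.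

Lemma hdist_exists n A B d : HS n A -> HS n B ->
  (forall a, A a -> exists b, B b /\ sdist n a b <= d) ->
  (forall b, B b -> exists a, A a /\ sdist n b a <= d) -> exists r, hdist n A B r /\ r <= d.
Proof.
  intros HA HB H1 H2. destruct (excess_exists n A B d HA HB H1) as [r1 [E1 L1]].
  destruct (excess_exists n B A d HB HA H2) as [r2 [E2 L2]].
  exists (Rmax r1 r2). split. exists r1, r2; auto. apply Rmax_lub; auto.
Qed.

Definition comb (a b : Pt) t : Pt := fun i => (1 - t) * a i + t * b i.

Lemma arc_nz n a b t : arc_pt n a b t = nz n (comb a b t).
Proof. reflexivity. Qed.

Lemma comb_dot n a b t : sphere n a -> sphere n b ->
  dot n (comb a b t) (comb a b t) = (1-t)*(1-t) + 2*t*(1-t)*dot n a b + t*t.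
Proof.
  intros [_ Ha] [_ Hb]. unfold comb. rewrite dot_comb_l, !dot_comb_r, Ha, Hb, (dot_sym n b a). ring.
Qed.

Lemma comb_lb n a b t : sphere n a -> sphere n b -> 0 <= t <= 1 ->
  (1 + dot n a b) / 2 <= dot n (comb a b t) (comb a b t).
Proof. intros. rewrite comb_dot; auto. destruct (sphere_dot n a b H H0).
  assert (0 <= (1 - dot n a b) * ((2*t-1)*(2*t-1))) by (apply Rmult_le_pos; [lra | apply Rle_0_sqr]).
  replace ((1 - t) * (1 - t) + 2 * t * (1 - t) * dot n a b + t * t) with
   ((1 + dot n a b) / 2 + (1 - dot n a b) * ((2*t-1)*(2*t-1)) / 2) by field. lra. Qed.

Lemma comb_ub n a b t : sphere n a -> sphere n b -> 0 <= t <= 1 ->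
  dot n (comb a b t) (comb a b t) <= 1.
Proof. intros. rewrite comb_dot; auto. destruct (sphere_dot n a b H H0).
  assert (0 <= t * (1 - t) * (1 - dot n a b)) by (apply Rmult_le_pos; [apply Rmult_le_pos|]; lra). nra. Qed.

Lemma comb_zero n a b t : sphere n a -> sphere n b -> forall i, (n < i)%nat -> comb a b t i = 0.
Proof. intros [Ha _] [Hb _] i Hi; unfold comb; rewrite Ha, Hb; auto; ring. Qed.

Lemma nz_pos n v : sphere n (nz n v) -> 0 < dot n v v.
Proof.
  intros [_ H]. destruct (dot_self_ge0 n v) as [h|h]; auto.
  rewrite dot_nz_l, dot_nz_r, <- h in H. unfold Rdiv in H. rewrite !Rmult_0_l in H. lra.
Qed.

Lemma nz_scal n v : 0 < dot n v v -> nz n v = vscal (/ nrm n v) v.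
Proof. intros; apply functional_extensionality; intro; unfold nz, vscal, nrm; unfold Rdiv; ring. Qed.

Lemma normalize_close n v v' : 0 < dot n v v -> 0 < dot n v' v' ->
  cd n (nz n v) (nz n v') <= 2 * cd n v v' / nrm n v.
Proof.
  intros Hv Hv'. pose proof (nrm_pos n v Hv). pose proof (nrm_pos n v' Hv').
  rewrite !nz_scal by auto. unfold cd.
  replace (vsub (vscal (/ nrm n v) v) (vscal (/ nrm n v') v')) with
    (vadd (vscal (/ nrm n v) (vsub v v')) (vscal (/ nrm n v - / nrm n v') v')).
  2:{ apply functional_extensionality; intro; unfold vadd, vsub, vscal; ring. }
  eapply Rle_trans. apply nrm_add. rewrite !nrm_scal.
  rewrite (Rabs_right (/ nrm n v)) by (left; apply Rinv_0_lt_compat; auto).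
  replace (/ nrm n v - / nrm n v') with ((nrm n v' - nrm n v) * / (nrm n v * nrm n v')) by (field; lra).
  rewrite Rabs_mult, (Rabs_right (/ (nrm n v * nrm n v'))) by (left; apply Rinv_0_lt_compat; nra).
  rewrite ?(Rabs_right (nrm n v')) by lra.
  pose proof (nrm_diff n v' v). pose proof (nrm_diff n v v'). rewrite cd_sym in H1.
  fold (cd n v v').
  assert (Rabs (nrm n v' - nrm n v) <= cd n v v') by (apply Rabs_le; lra).
  replace (Rabs (nrm n v' - nrm n v) * / (nrm n v * nrm n v') * nrm n v') with (Rabs (nrm n v' - nrm n v) / nrm n v) by (field; lra).
  unfold Rdiv. apply Rle_trans with (/ nrm n v * cd n v v' + cd n v v' * / nrm n v).
  apply Rplus_le_compat_l. apply Rmult_le_compat_r; auto. left; apply Rinv_0_lt_compat; auto.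
  right; ring.
Qed.

Lemma cd_comb n a b a' b' t : 0 <= t <= 1 ->
  cd n (comb a b t) (comb a' b' t) <= (1 - t) * cd n a a' + t * cd n b b'.
Proof.
  intros. unfold cd. replace (vsub (comb a b t) (comb a' b' t)) with
   (vadd (vscal (1-t) (vsub a a')) (vscal t (vsub b b'))).
  2:{ apply functional_extensionality; intro; unfold comb, vadd, vsub, vscal; ring. }
  eapply Rle_trans. apply nrm_add. rewrite !nrm_scal, !Rabs_right by lra. lra.
Qed.

Definition clos n W := hclosure n (Hsconv n) W.

Lemma clos_HS n W : clos n W -> HS n W.
Proof. intros [H _]; auto. Qed.

Lemma sdist_cd n x y r : sphere n x -> sphere n y -> sdist n x y <= r -> cd n x y <= r.
Proof. intros. pose proof (cd_le_sdist n x y H H0). lra. Qed.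

Lemma clos_arc n W : clos n W -> forall a b t, W a -> W b -> -1 < dot n a b -> 0 <= t <= 1 ->
  W (arc_pt n a b t).
Proof.
  intros HW a b t Ha Hb Hab Ht. pose proof (clos_HS n W HW) as HS0. pose proof HS0 as [H1 [H2 H3]].
  pose proof (H1 a Ha) as Sa. pose proof (H1 b Hb) as Sb.
  pose proof (comb_lb n a b t Sa Sb Ht) as Hlb.
  set (c := sqrt ((1 + dot n a b) / 2)).
  assert (Hc : 0 < c) by (apply sqrt_lt_R0; lra).
  assert (Hcv : c <= nrm n (comb a b t)) by (apply sqrt_le_1_alt; auto).
  assert (Hv : 0 < dot n (comb a b t) (comb a b t)) by lra.
  rewrite arc_nz. apply H3. apply nz_sphere; auto. apply comb_zero; auto.
  intros eps He. destruct (sdist_small eps He) as [d [Hd Hd']].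
  set (rho := d / (2 / c + 2)).
  assert (Hrho : 0 < rho) by (unfold rho; apply Rdiv_lt_0_compat; auto; assert (0 < 2/c) by (apply Rdiv_lt_0_compat; lra); lra).
  destruct HW as [_ HW]. destruct (HW rho Hrho) as [V [r [[HVs HVc] [Hh Hr]]]].
  destruct (hdist_use n W V r HS0 HVs Hh) as [U1 U2].
  destruct (U1 a Ha) as [a' [Ha' Hda]]. destruct (U1 b Hb) as [b' [Hb' Hdb]].
  destruct HVc as [_ HVc]. pose proof (HVc a' b' t Ha' Hb' Ht) as Hm'.
  destruct (U2 _ Hm') as [y [Hy Hdy]].
  pose proof (proj1 HVs _ Hm') as Sm'. pose proof (proj1 HVs _ Ha') as Sa'. pose proof (proj1 HVs _ Hb') as Sb'.
  exists y. split; auto. apply Hd'. apply nz_sphere; auto. apply comb_zero; auto. apply H1; auto.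
  eapply Rle_lt_trans. apply cd_tri with (y := arc_pt n a' b' t).
  apply sdist_cd in Hda; auto. apply sdist_cd in Hdb; auto. apply sdist_cd in Hdy; auto.
  rewrite arc_nz in Sm' |- *.
  pose proof (normalize_close n (comb a b t) (comb a' b' t) Hv (nz_pos n _ Sm')).
  pose proof (cd_comb n a b a' b' t Ht).
  assert (cd n (comb a b t) (comb a' b' t) <= r) by nra.
  assert (2 * cd n (comb a b t) (comb a' b' t) / nrm n (comb a b t) <= 2 * r / c).
  { unfold Rdiv. apply Rmult_le_compat. pose proof (cd_ge0 n (comb a b t) (comb a' b' t)); lra.
    left; apply Rinv_0_lt_compat; lra. lra. apply Rinv_le_contravar; lra. }
  assert (r * (2 / c + 2) < d).
  { assert (0 < 2 / c + 2) by (assert (0 < 2/c) by (apply Rdiv_lt_0_compat; lra); lra).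
    unfold rho in Hr. apply Rmult_lt_compat_r with (r := 2 / c + 2) in Hr; auto.
    replace (d / (2 / c + 2) * (2 / c + 2)) with d in Hr by (field; repeat split; try lra; nra). lra. }
  assert (0 <= r) by (pose proof (cd_ge0 n a a'); lra).
  rewrite arc_nz in Hdy.
  assert (r * (2 / c + 2) = 2 * r / c + 2 * r) by (field; lra). lra.
Qed.

Lemma polar_closed n V : (forall P, V P -> sphere n P) -> closed_in_sphere n (polar n V).
Proof.
  intros HV x Sx Hap. split; auto. intros P HP. apply Rle_ge, Rnot_lt_le; intro Hneg.
  destruct (Hap (- dot n P x) ltac:(lra)) as [y [[Sy Hy] Hd]].
  pose proof (cd_le_sdist n x y Sx Sy).
  pose proof (dot_diff n P x y). rewrite nrm_sphere in H0 by auto.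
  specialize (Hy P HP). pose proof (Rle_abs (dot n P y - dot n P x)).
  rewrite Rabs_minus_sym in H1. lra.
Qed.

Lemma cd_opp n w d : cd n w (vopp d) = cd n (vopp w) d.
Proof. unfold cd. replace (vsub w (vopp d)) with (vscal (-1) (vsub (vopp w) d)).
  rewrite nrm_scal. replace (Rabs (-1)) with 1. ring. rewrite Rabs_left; lra.
  apply functional_extensionality; intro; unfold vscal, vsub, vopp; ring. Qed.

Lemma clos_nonsym n W : clos n W -> exists v, W v /\ ~ W (vopp v).
Proof.
  intros HW. apply NNPP; intro Hn.
  assert (Hsym : forall v, W v -> W (vopp v)) by (intros v Hv; apply NNPP; intro; apply Hn; exists v; auto).
  pose proof (clos_HS n W HW) as HS0. pose proof HS0 as [HW1 [[w0 Hw0] HW3]].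
  destruct HW as [_ HW]. destruct (HW (1/8) ltac:(lra)) as [V [r [[HVs [[P [SP HP]] HVc]] [Hh Hr]]]].
  destruct (hdist_use n W V r HS0 HVs Hh) as [U1 U2].
  pose proof HVs as [HV1 [[q0 Hq0] _]].
  assert (HPn : forall Q, V Q -> dot n P Q < 0).
  { intros Q HQ. apply Rnot_le_lt; intro; apply (HP Q HQ). split; auto. lra. }
  assert (Hr0 : 0 <= r).
  { destruct (U1 w0 Hw0) as [b [_ Hb]]. pose proof (sdist_ge0 n w0 b); lra. }
  set (E := fun z => exists Q, V Q /\ z = - dot n P Q).
  assert (Hbd : bound E).
  { exists 1. intros z [Q [HQ ->]]. destruct (sphere_dot n P Q SP (HV1 Q HQ)); lra. }
  destruct (completeness E Hbd (ex_intro _ _ (ex_intro _ q0 (conj Hq0 eq_refl)))) as [s [Hs1 Hs2]].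
  assert (Hs0 : 0 < s).
  { pose proof (Hs1 _ (ex_intro _ q0 (conj Hq0 eq_refl))). pose proof (HPn q0 Hq0). lra. }
  assert (Hc : exists c, V c /\ s / 2 < - dot n P c).
  { apply NNPP; intro Hn2.
    assert (is_upper_bound E (s/2)).
    { intros z [Q [HQ ->]]. apply Rnot_lt_le; intro; apply Hn2; exists Q; auto. }
    apply Hs2 in H. lra. }
  destruct Hc as [c [Hcv Hcs]].
  destruct (U2 c Hcv) as [w [Hw Hcw]].
  destruct (U1 (vopp w) (Hsym w Hw)) as [d [Hd Hwd]].
  pose proof (HV1 c Hcv) as Sc. pose proof (HV1 d Hd) as Sd. pose proof (HW1 w Hw) as Sw.
  pose proof (sphere_opp n w Sw) as Sw'.
  apply sdist_cd in Hcw; auto. apply sdist_cd in Hwd; auto.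
  assert (Hcd : cd n c (vopp d) <= 2 * r).
  { pose proof (cd_tri n c w (vopp d)). rewrite (cd_opp n w d) in H. lra. }
  assert (Ht : 0 <= 1/2 <= 1) by (split; lra). pose proof (HVc c d (1/2) Hcv Hd Ht) as Hm.
  pose proof (HV1 _ Hm) as Sm. rewrite arc_nz in Sm, Hm.
  pose proof (nz_pos n _ Sm) as Hpos. pose proof (nrm_pos n _ Hpos) as HN.
  assert (HNe : nrm n (comb c d (1/2)) = 1/2 * cd n c (vopp d)).
  { unfold cd. replace (comb c d (1/2)) with (vscal (1/2) (vsub c (vopp d))).
    rewrite nrm_scal, Rabs_right; lra.
    apply functional_extensionality; intro; unfold comb, vscal, vsub, vopp; field. }
  pose proof (Hs1 _ (ex_intro _ _ (conj Hm eq_refl))) as Hms.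
  rewrite dot_nz_r in Hms. unfold comb in Hms. rewrite dot_comb_r in Hms. fold (comb c d (1/2)) in Hms.
  set (N := nrm n (comb c d (1/2))) in *.
  assert (- ((1 - 1/2) * dot n P c + 1/2 * dot n P d) <= s * N).
  { apply Rmult_le_compat_r with (r := N) in Hms; [|lra].
    replace (- (((1 - 1/2) * dot n P c + 1/2 * dot n P d) / N) * N) with (- ((1 - 1/2) * dot n P c + 1/2 * dot n P d)) in Hms
      by (field; lra). lra. }
  assert (s * N <= s * r) by (apply Rmult_le_compat_l; lra).
  pose proof (HPn d Hd). nra.
Qed.

Definition arcconv n (W : Pt -> Prop) := forall a b t, W a -> W b -> -1 < dot n a b -> 0 <= t <= 1 ->
  W (arc_pt n a b t).

Lemma key_ineq (c t px s a : R) : 0 < c <= 1 -> -1 <= s <= 1 -> -1 <= px <= 1 ->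
  a = px - c * s -> 0 < a -> t = c * a / 4 ->
  c * c * ((1-t)*(1-t) + 2*t*(1-t)*s + t*t) < ((1-t)*c + t*px) * ((1-t)*c + t*px) /\
  0 <= (1-t)*c + t*px.
Proof.
  intros Hc Hs Hp Ha Ha0 Ht.
  assert (Hid : ((1-t)*c + t*px) * ((1-t)*c + t*px) - c * c * ((1-t)*(1-t) + 2*t*(1-t)*s + t*t)
    = 2*t*c*a + t*t*((px - c)*(px - c) - 2*c*c*(1-s))) by (rewrite Ha; ring).
  assert (Ht0 : 0 < t) by (rewrite Ht; apply Rmult_lt_0_compat; [nra|lra]).
  assert (Ha2 : a <= 2) by nra.
  assert (Hb : -4 <= (px - c)*(px - c) - 2*c*c*(1-s)) by nra.
  split.
  - assert (0 < 2*t*c*a - 4*t*t).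
    { replace (2*t*c*a - 4*t*t) with (2*t*(c*a - 2*t)) by ring.
      apply Rmult_lt_0_compat. lra. rewrite Ht. nra. }
    assert (t*t*(-4) <= t*t*((px - c)*(px - c) - 2*c*c*(1-s))) by (apply Rmult_le_compat_l; nra).
    lra.
  - rewrite Ht. nra.
Qed.

Lemma separate n W x : HS n W -> arcconv n W -> sphere n x -> ~ W x ->
  exists q, polar n W q /\ dot n q x < 0.
Proof.
  intros [HW1 [HW2 HW3]] Hconv Sx Hx.
  destruct (max_attained n W (dot n x) 1 HW1 HW2 HW3 ltac:(lra)) as [w [Hw Hmax]].
  { intros; apply lip_dot; auto. }
  pose proof (HW1 w Hw) as Sw.
  set (c := dot n x w).
  destruct (Rle_lt_dec c 0) as [Hc|Hc].
  - exists (vopp x). split. split. apply sphere_opp; auto.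
    intros P HP. rewrite dot_opp_r. specialize (Hmax P HP). fold c in Hmax. rewrite (dot_sym n P x). lra.
    rewrite dot_opp_l. destruct Sx as [_ ->]. lra.
  - assert (Hc1 : c < 1).
    { destruct (sphere_dot n x w Sx Sw). destruct (Rle_lt_or_eq_dec c 1) as [h|h]; auto.
      exfalso. apply Hx. rewrite (sphere_eq n x w Sx Sw h). auto. }
    set (q0 := fun i => c * w i + (-1) * x i).
    assert (Hq0 : dot n q0 q0 = 1 - c * c).
    { unfold q0. rewrite dot_comb_l, !dot_comb_r. destruct Sx as [_ Hxx]. destruct Sw as [_ Hww].
      rewrite Hxx, Hww, (dot_sym n w x). fold c. ring. }
    assert (Hq0p : 0 < dot n q0 q0) by nra.
    pose proof (nrm_pos n q0 Hq0p) as HN.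
    exists (nz n q0). split; [split|].
    + apply nz_sphere; auto. intros i Hi; unfold q0. destruct Sx as [Hx0 _]; destruct Sw as [Hw0 _].
      rewrite Hx0, Hw0; auto; ring.
    + intros P HP. rewrite dot_nz_r. apply Rle_ge. apply Rmult_le_pos; [| left; apply Rinv_0_lt_compat; auto].
      unfold q0. rewrite dot_comb_r. apply Rnot_lt_le; intro Hneg.
      pose proof (HW1 P HP) as SP.
      set (s := dot n P w) in *. set (px := dot n P x) in *.
      destruct (sphere_dot n P w SP Sw) as [Hs1 Hs2]. fold s in Hs1, Hs2.
      destruct (sphere_dot n P x SP Sx) as [Hp1 Hp2]. fold px in Hp1, Hp2.
      assert (Hsm : -1 < s).
      { destruct (Rle_lt_or_eq_dec (-1) s Hs1) as [h|h]; auto. exfalso.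
        assert (P = vopp w). { apply (sphere_eq n); auto. apply sphere_opp; auto. rewrite dot_opp_r. fold s; lra. }
        assert (px = - c). { unfold px, c. rewrite H, dot_opp_l, dot_sym; auto. }
        rewrite <- h in Hneg. lra. }
      set (a := px - c * s). set (t := c * a / 4).
      assert (Ha0 : 0 < a) by (unfold a; lra).
      assert (Hc' : 0 < c <= 1) by lra.
      destruct (key_ineq c t px s a Hc' (conj Hs1 Hs2) (conj Hp1 Hp2) eq_refl Ha0 eq_refl) as [K1 K2].
      assert (Ht : 0 <= t <= 1).
      { unfold t. split. apply Rmult_le_pos; [nra|lra]. assert (a <= 2) by (unfold a; nra). nra. }
      assert (Hsm' : -1 < dot n w P) by (rewrite (dot_sym n w P); exact Hsm).
      pose proof (Hconv w P t Hw HP Hsm' Ht) as Hwt.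
      specialize (Hmax _ Hwt). rewrite arc_nz, dot_nz_r in Hmax.
      unfold comb in Hmax. rewrite dot_comb_r in Hmax. fold (comb w P t) in Hmax.
      fold c in Hmax. rewrite (dot_sym n x P) in Hmax. fold px in Hmax.
      assert (HD : dot n (comb w P t) (comb w P t) = (1-t)*(1-t) + 2*t*(1-t)*s + t*t).
      { rewrite comb_dot, (dot_sym n w P); auto. }
      assert (HDp : 0 < dot n (comb w P t) (comb w P t)).
      { pose proof (comb_lb n w P t Sw SP Ht). rewrite (dot_sym n w P) in H. fold s in H. lra. }
      set (D := nrm n (comb w P t)) in *.
      assert (HD2 : D * D = (1-t)*(1-t) + 2*t*(1-t)*s + t*t) by (unfold D; rewrite nrm_sq; auto).
      assert (HD0 : 0 < D) by (apply nrm_pos; auto).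
      assert (c * D < (1-t)*c + t*px).
      { rewrite <- HD2 in K1. nra. }
      apply Rmult_le_compat_r with (r := D) in Hmax; [|lra].
      replace (((1 - t) * c + t * px) / D * D) with ((1 - t) * c + t * px) in Hmax by (field; lra).
      lra.
    + rewrite dot_nz_l.
      assert (Hqx : dot n q0 x = c * c - 1).
      { unfold q0. rewrite dot_comb_l. destruct Sx as [_ Hxx]. rewrite Hxx, (dot_sym n w x). fold c. ring. }
      rewrite Hqx. unfold Rdiv.
      assert (0 < / nrm n q0) by (apply Rinv_0_lt_compat; auto). nra.
Qed.

Lemma clos_arcconv n W : clos n W -> arcconv n W.
Proof. intros H a b t; apply clos_arc; auto. Qed.

Lemma clos_polar_ne n W : clos n W -> exists Q, polar n W Q.
Proof.
  intros HW. destruct (clos_nonsym n W HW) as [v [Hv Hnv]].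
  pose proof (clos_HS n W HW) as HS0.
  destruct (separate n W (vopp v) HS0 (clos_arcconv n W HW) (sphere_opp n v (proj1 HS0 v Hv)) Hnv)
    as [q [Hq _]]. eauto.
Qed.

Lemma bipolar n W : clos n W -> W = polar n (polar n W).
Proof.
  intros HW. pose proof (clos_HS n W HW) as HS0.
  apply functional_extensionality; intro x; apply propositional_extensionality; split.
  - intros Hx. split. apply HS0; auto. intros P [_ HP]. rewrite dot_sym. apply HP; auto.
  - intros [Sx Hx]. apply NNPP; intro Hn.
    destruct (separate n W x HS0 (clos_arcconv n W HW) Sx Hn) as [q [Hq Hqx]].
    specialize (Hx q Hq). lra.
Qed.

Lemma polar_clos n W : clos n W -> clos n (polar n W).
Proof.
  intros HW. pose proof (clos_HS n W HW) as HS0. pose proof HS0 as [HW1 _].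
  assert (HSp : HS n (polar n W)).
  { split. intros x [Sx _]; auto. split. apply clos_polar_ne; auto. apply polar_closed; auto. }
  split; auto.
  destruct (clos_nonsym n W HW) as [v [Hv Hnv]]. pose proof (HW1 v Hv) as Sv.
  destruct (separate n W (vopp v) HS0 (clos_arcconv n W HW) (sphere_opp n v Sv) Hnv)
    as [u [Hu Huv]].
  pose proof Hu as [Su Hu2].
  rewrite dot_opp_r in Huv. set (k := dot n v u).
  assert (Hk : 0 < k) by (unfold k; rewrite dot_sym; lra).
  intros eps He.
  destruct (sdist_small (eps/2) ltac:(lra)) as [d1 [Hd1 Hd1']].
  set (s := Rmin (1/2) (d1/4)).
  assert (Hs : 0 < s) by (unfold s; apply Rmin_pos; lra).
  assert (Hs1 : s <= 1/2) by apply Rmin_l. assert (Hs2 : s <= d1/4) by apply Rmin_r.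
  set (del := s * k / 2).
  assert (Hdel : 0 < del) by (unfold del; nra).
  set (Wd := fun z => polar n W z /\ dot n v z >= del).
  assert (HWd1 : forall z, Wd z -> sphere n z) by (intros z [[Sz _] _]; auto).
  assert (HSd : HS n Wd).
  { split; auto. split.
    - exists u. split; auto. apply Rle_ge. fold k. unfold del. nra.
    - intros x Sx Hap. split.
      + apply polar_closed; auto. intros e He'. destruct (Hap e He') as [y [[Hy _] Hxy]]. eauto.
      + apply Rle_ge, Rnot_lt_le; intro Hlt.
        destruct (Hap (del - dot n v x) ltac:(lra)) as [y [[[Sy _] Hy] Hxy]].
        pose proof (cd_le_sdist n x y Sx Sy). pose proof (dot_diff n v x y).
        rewrite nrm_sphere in H0 by auto. pose proof (Rle_abs (dot n v y - dot n v x)).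
        rewrite Rabs_minus_sym in H1. lra. }
  assert (HsWd : Hsconv n Wd).
  { split; auto. split.
    - exists (vopp v). split. apply sphere_opp; auto.
      intros Q [_ HQ] [_ HH]. rewrite dot_opp_l in HH. lra.
    - intros A B t [[SA HA] HvA] [[SB HB] HvB] Ht. rewrite arc_nz.
      assert (Hvv : dot n v (comb A B t) >= del).
      { unfold comb. rewrite dot_comb_r. nra. }
      assert (Hpos : 0 < dot n (comb A B t) (comb A B t)).
      { pose proof (CS n v (comb A B t)). destruct Sv as [_ Hvv']. rewrite Hvv' in H. nra. }
      pose proof (nrm_pos n _ Hpos) as HN.
      assert (HN1 : nrm n (comb A B t) <= 1) by (apply nrm_le_sq; [lra| rewrite Rmult_1_r; apply comb_ub; auto]).
      split; [split|].
      + apply nz_sphere; auto. apply comb_zero; auto.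
      + intros P HP. rewrite dot_nz_r. unfold comb. rewrite dot_comb_r. fold (comb A B t).
        specialize (HA P HP). specialize (HB P HP). unfold Rdiv. apply Rle_ge, Rmult_le_pos.
        nra. left; apply Rinv_0_lt_compat; auto.
      + rewrite dot_nz_r. set (X := dot n v (comb A B t)) in *. set (N := nrm n (comb A B t)) in *.
        assert (X = X / N * N) by (field; lra).
        assert (0 <= X / N) by (unfold Rdiv; apply Rmult_le_pos; [lra| left; apply Rinv_0_lt_compat; auto]).
        nra. }
  destruct (hdist_exists n (polar n W) Wd (eps/2) HSp HSd) as [r [Hh Hr]].
  - intros y [Sy Hy].
    set (yy := vadd y (vscal s u)).
    assert (Hcy : cd n y yy = s).
    { unfold cd, yy. replace (vsub y (vadd y (vscal s u))) with (vscal (-s) u).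
      rewrite nrm_scal, nrm_sphere by auto. rewrite Rabs_left; lra.
      apply functional_extensionality; intro; unfold vsub, vadd, vscal; ring. }
    assert (HNy : nrm n yy <= 1 + s).
    { unfold yy. eapply Rle_trans. apply nrm_add. rewrite nrm_scal, !nrm_sphere by auto.
      rewrite Rabs_right; lra. }
    assert (HNy2 : 1 - s <= nrm n yy).
    { pose proof (nrm_diff n y yy). rewrite nrm_sphere in H by auto. lra. }
    assert (Hpos : 0 < dot n yy yy).
    { rewrite <- nrm_sq. nra. }
    pose proof (nrm_pos n _ Hpos) as HN.
    assert (Szz : sphere n (nz n yy)).
    { apply nz_sphere; auto. intros i Hi; unfold yy, vadd, vscal.
      destruct Sy as [Hy0 _]; destruct Su as [Hu0 _]. rewrite Hy0, Hu0; auto; ring. }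
    exists (nz n yy). split; [split; [split|]|].
    + auto.
    + intros P HP. rewrite dot_nz_r. unfold yy. rewrite dot_add_r, dot_scal_r.
      specialize (Hy P HP). specialize (Hu2 P HP). unfold Rdiv. apply Rle_ge, Rmult_le_pos.
      nra. left; apply Rinv_0_lt_compat; auto.
    + rewrite dot_nz_r. unfold yy. rewrite dot_add_r, dot_scal_r. fold k.
      assert (0 <= dot n v y) by (apply Rge_le, Hy; auto).
      set (N := nrm n (vadd y (vscal s u))) in *. assert (HN0 : 0 < N) by exact HN. assert (HN3 : N <= 1 + s) by exact HNy.
      apply Rle_ge. unfold del.
      assert ((dot n v y + s * k) = (dot n v y + s * k) / N * N) by (field; lra).
      assert (0 <= (dot n v y + s * k) / N) by (unfold Rdiv; apply Rmult_le_pos; [nra| left; apply Rinv_0_lt_compat; auto]).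
      nra.
    + left. apply Hd1'; auto. rewrite <- (nz_sphere_id n y Sy) at 1.
      eapply Rle_lt_trans. apply normalize_close; auto. destruct Sy as [_ ->]; lra.
      rewrite nrm_sphere by auto. rewrite Hcy. lra.
  - intros z Hz. exists z. split. apply Hz. rewrite sdist_self; auto. lra.
  - exists Wd, r. split; [exact HsWd| split; [exact Hh| lra]].
Qed.

Definition unitv (k : nat) : Pt := fun i => if Nat.eqb i k then 1 else 0.

Lemma unit_dot n k l : dot n (unitv k) (unitv l) =
  if Nat.eqb k l then (if Nat.leb k n then 1 else 0) else 0.
Proof.
  unfold dot, unitv. induction n.
  - simpl. destruct k, l; simpl; try ring; destruct (Nat.eqb _ _); ring.
  - change (sum_f_R0 ?f (S n)) with (sum_f_R0 f n + f (S n)). cbv beta. rewrite IHn. destruct (Nat.eqb_spec k l); subst.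
    + destruct (Nat.eqb_spec (S n) l); subst.
      * rewrite Nat.leb_refl. replace (Nat.leb (S n) n) with false by (symmetry; apply Nat.leb_gt; lia). ring.
      * destruct (Nat.leb_spec l n), (Nat.leb_spec l (S n)); try lia; ring.
    + destruct (Nat.eqb_spec (S n) k), (Nat.eqb_spec (S n) l); subst; try lia; ring.
Qed.

Lemma unit_sphere n k : (k <= n)%nat -> sphere n (unitv k).
Proof.
  intros Hk. split.
  - intros i Hi. unfold unitv. destruct (Nat.eqb_spec i k); auto. lia.
  - rewrite unit_dot, Nat.eqb_refl. replace (Nat.leb k n) with true; auto. symmetry; apply Nat.leb_le; auto.
Qed.

Lemma ex6 n : (1 <= n)%nat -> exists W, ~ (polar_image n (Hsconv n) W <-> Hsconv n W).
Proof.
  intros Hn. set (e0 := unitv 0). set (e1 := unitv 1).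
  assert (S0 : sphere n e0) by (apply unit_sphere; lia).
  assert (S1 : sphere n e1) by (apply unit_sphere; lia).
  assert (H01 : dot n e0 e1 = 0) by (unfold e0, e1; rewrite unit_dot; auto).
  set (Single := fun x => x = e0).
  exists (polar n Single). intros [Himp _].
  assert (Hsing : Hsconv n Single).
  { split; [split; [|split]|].
    - intros x ->; auto.
    - exists e0; reflexivity.
    - intros x Sx Hap. unfold Single.
      assert (Hd : sdist n x e0 = 0).
      { apply Rle_antisym; [| apply sdist_ge0]. apply Rnot_lt_le; intro H.
        destruct (Hap _ H) as [y [-> Hy]]. lra. }
      apply (sphere_eq n); auto. unfold sdist in Hd.
      rewrite <- (cos_acos (dot n x e0)) by (apply sphere_dot; auto). rewrite Hd, cos_0; auto.
    - split.
      + exists (vopp e0). split. apply sphere_opp; auto. intros Q HQ [_ HH]. unfold Single in HQ; subst.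
        rewrite dot_opp_l in HH. destruct S0 as [_ HS]. lra.
      + intros A B t HA HB Ht. unfold Single in *; subst. rewrite arc_nz.
        replace (comb e0 e0 t) with e0. apply nz_sphere_id; auto.
        apply functional_extensionality; intro; unfold comb; ring. }
  assert (Hpi : polar_image n (Hsconv n) (polar n Single)) by (exists Single; auto).
  destruct (Himp Hpi) as [_ [[P [SP HP]] _]].
  destruct (Rlt_le_dec (-1) (dot n P e0)) as [Hlt|Hle].
  - set (vv := vadd e0 P).
    assert (Hvv : dot n vv vv = 2 + 2 * dot n P e0).
    { unfold vv. rewrite dot_add_l, !dot_add_r. destruct S0 as [_ A]. destruct SP as [_ B].
      rewrite A, B, (dot_sym n e0 P). ring. }
    assert (Hpos : 0 < dot n vv vv) by lra. pose proof (nrm_pos n _ Hpos).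
    apply (HP (nz n vv)).
    + split. apply nz_sphere; auto. intros i Hi; unfold vv, vadd. destruct S0 as [A _]; destruct SP as [B _].
      rewrite A, B; auto; ring.
      intros P' HP'. unfold Single in HP'. subst P'. rewrite dot_nz_r. unfold vv. rewrite dot_add_r. destruct S0 as [_ A].
      rewrite A, (dot_sym n e0 P). unfold Rdiv. apply Rle_ge, Rmult_le_pos. lra. left; apply Rinv_0_lt_compat; auto.
    + split. apply nz_sphere; auto. intros i Hi; unfold vv, vadd. destruct S0 as [A _]; destruct SP as [B _].
      rewrite A, B; auto; ring.
      rewrite dot_nz_r. unfold vv. rewrite dot_add_r. destruct SP as [_ B].
      rewrite B. unfold Rdiv. apply Rle_ge, Rmult_le_pos. lra. left; apply Rinv_0_lt_compat; auto.
  - assert (P = vopp e0).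
    { apply (sphere_eq n); auto. apply sphere_opp; auto. rewrite dot_opp_r.
      destruct (sphere_dot n P e0 SP S0). lra. }
    subst P. apply (HP e1).
    + split; auto. intros P' HP'. unfold Single in HP'. subst P'. rewrite H01; lra.
    + split; auto. rewrite dot_opp_l, H01. lra.
Qed.

Theorem proposition2 (n : nat) (hn : (1 <= n)%nat) :
  (* (5) *)
  (forall W, hclosure n (Hsconv n) W -> Hcirc n W) /\
  (* (6) *)
  (exists W, ~ (polar_image n (Hsconv n) W <-> Hsconv n W)) /\
  (* (7) *)
  (forall W, polar_image n (hclosure n (Hsconv n)) W <-> hclosure n (Hsconv n) W) /\
  (* (8) *)
  (forall V1 V2, hclosure n (Hsconv n) V1 -> hclosure n (Hsconv n) V2 ->
     polar n V1 = polar n V2 -> V1 = V2).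
Proof.
  split; [|split; [|split]].
  - intros W HW. split. apply (clos_HS n W HW). apply (clos_polar_ne n W HW).
  - apply ex6; auto.
  - intros W. split.
    + intros [V [HV ->]]. apply (polar_clos n V HV).
    + intros HW. exists (polar n W). split. apply (polar_clos n W HW). apply (bipolar n W HW).
  - intros V1 V2 H1 H2 He. rewrite (bipolar n V1 H1), (bipolar n V2 H2), He. reflexivity.
Qed.
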